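(* Let $\alpha,\theta,\gamma>0$, let $C_{K,r}=\max\big(4L^2K/(\theta^2\alpha N),\tilde r_2^2(\gamma)\big)$, and assume there is $A>0$ such that every $f\in F$ with $\|f-f^*\|_{L_2}^2=C_{K,r}$ satisfies $\|f-f^*\|_{L_2}^2\le AP\mathcal L_f$, and that $\theta-A^{-1}<-\theta$. Grant (Lip-Conv) and (Conv). Then on the event $\Omega_K$, $$\sup_{f\in F:\|f-f^*\|_{L_2}>\sqrt{C_{K,r}}}\mathrm{MOM}_K(\ell_{f^*}-\ell_f)<-\theta C_{K,r}\quad\text{and}\quad\sup_{f\in F:\|f-f^*\|_{L_2}\le\sqrt{C_{K,r}}}\mathrm{MOM}_K(\ell_{f^*}-\ell_f)\le\theta C_{K,r}.$$
   Context: Setting: $\bar{\mathcal Y}\subset\mathbb R$ convex, $F\subset L_2(\mu)$ a class of measurable functions $\mathcal X\to\bar{\mathcal Y}$, $\ell_f(x,y)=\bar\ell(f(x),y)$, $(X,Y)\sim P$, $X\sim\mu$, $Pg=\mathbb Eg(X,Y)$; $f^*$ unique minimizer of $f\mapsto P\ell_f$ over $F$, $\mathcal L_f=\ell_f-\ell_{f^*}$, $\|g\|_{L_2}=(\mathbb Eg(X)^2)^{1/2}$. (Lip-Conv): there is $L>0$ with $u\mapsto\bar\ell(u,y)$ convex and $L$-Lipschitz for all $y$. (Conv): $F$ convex. Data $(X_i,Y_i)_{i=1}^N$; $K$ divides $N$; blocks $B_1,\dots,B_K$ of size $N/K$ partition $\{1,\dots,N\}$; $P_{B_k}g=\frac KN\sum_{i\in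 B_k}g(X_i,Y_i)$; $\mathrm{MOM}_K(g)$ = median of $(P_{B_k}g)_k$. $\tilde r_2(\gamma)$ is a given positive number (the Rademacher complexity fixed point). Event: $\Omega_K=\{\forall f\in F\text{ with }\|f-f^*\|_{L_2}\le\sqrt{C_{K,r}},\ \exists J\subset\{1,\dots,K\},|J|>K/2,\ \forall k\in J:|(P_{B_k}-P)\mathcal L_f|\le\theta C_{K,r}\}$. *)

(* Defs.v *)
From Stdlib Require Import Reals Lra List.
Open Scope R_scope.

(* Abstract expectation (integral w.r.t. a probability measure) on functions
   T -> R: a normalized, positive, linear functional on a vector space of
   integrable functions. *)
Record Expectation (T : Type) := {
  integrable : (T -> R) -> Prop;
  Ex : (T -> R) -> R;
  int_const : forall c, integrable (fun _ => c);
  int_add : forall g h, integrable g -> integrable h ->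
              integrable (fun t => g t + h t);
  int_scal : forall c g, integrable g -> integrable (fun t => c * g t);
  Ex_add : forall g h, integrable g -> integrable h ->
              Ex (fun t => g t + h t) = Ex g + Ex h;
  Ex_scal : forall c g, integrable g -> Ex (fun t => c * g t) = c * Ex g;
  Ex_mono : forall g h, integrable g -> integrable h ->
              (forall t, g t <= h t) -> Ex g <= Ex h;
  Ex_const : forall c, Ex (fun _ => c) = c
}.
Arguments integrable {T} _ _.
Arguments Ex {T} _ _.

Section D.
Context {Xt : Type}.

Definition lossf (lbar : R -> R -> R) (f : Xt -> R) : Xt * R -> R :=
  fun p => lbar (f (fst p)) (snd p).

Definition excess (lbar : R -> R -> R) (f fstar : Xt -> R) : Xt * R -> R :=
  fun p => lossf lbar f p - lossf lbar fstar p.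

Definition L2norm (P : Expectation (Xt * R)) (g : Xt -> R) : R :=
  sqrt (Ex P (fun p => (g (fst p)) ^ 2)).

Definition PB (N K : nat) (blk : nat -> nat) (Xs : nat -> Xt) (Ys : nat -> R)
  (k : nat) (g : Xt * R -> R) : R :=
  INR K / INR N *
  fold_right Rplus 0
    (map (fun i => g (Xs i, Ys i)) (filter (fun i => Nat.eqb (blk i) k) (seq 0 N))).
End D.

Definition cnt (K : nat) (b : nat -> bool) : nat := length (filter b (seq 0 K)).

Definition is_median (K : nat) (v : nat -> R) (m : R) : Prop :=
  (K <= 2 * cnt K (fun k => if Rle_dec (v k) m then true else false))%nat /\
  (K <= 2 * cnt K (fun k => if Rle_dec m (v k) then true else false))%nat.

Definition CKr (L : R) (K N : nat) (theta alpha r : R) : R :=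
  Rmax (4 * L ^ 2 * INR K / (theta ^ 2 * alpha * INR N)) (r ^ 2).

(* The event Omega_K (for the fixed realization of the data) *)
Definition OmegaK {Xt : Type} (P : Expectation (Xt * R)) (lbar : R -> R -> R)
  (F : (Xt -> R) -> Prop) (fstar : Xt -> R) (N K : nat) (blk : nat -> nat)
  (Xs : nat -> Xt) (Ys : nat -> R) (theta C : R) : Prop :=
  forall f, F f -> L2norm P (fun x => f x - fstar x) <= sqrt C ->
    exists J : list nat, NoDup J /\ (forall k, In k J -> (k < K)%nat) /\
      (K < 2 * length J)%nat /\
      forall k, In k J ->
        Rabs (PB N K blk Xs Ys k (excess lbar f fstar) - Ex P (excess lbar f fstar))
          <= theta * C.

(* Main.v *)
Require Import Defs.
From Stdlib Require Import Reals Lra List.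
Open Scope R_scope.

From Stdlib Require Import Lia FunctionalExtensionality Classical.

Lemma abs_le_inv (a b : R) : Rabs a <= b -> - b <= a <= b.
Proof. intros H. unfold Rabs in H. destruct (Rcase_abs a); lra. Qed.

Lemma maj_lemma (K : nat) (b : nat -> bool) (J : list nat) :
  NoDup J -> (forall k, In k J -> (k < K)%nat) -> (K < 2 * length J)%nat ->
  (K <= 2 * cnt K b)%nat -> exists k, In k J /\ b k = true.
Proof.
  intros HN HJ HKJ Hc.
  destruct (classic (exists k, In k J /\ b k = true)) as [H|H]; [exact H|].
  exfalso.
  assert (Hinc : incl J (filter (fun x => negb (b x)) (seq 0 K))).
  { intros k Hk. apply filter_In. split.
    - apply in_seq. specialize (HJ k Hk). lia.
    - destruct (b k) eqn:E; [|reflexivity]. exfalso; apply H; eauto. }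
  pose proof (NoDup_incl_length HN Hinc) as Hl.
  pose proof (filter_length b (seq 0 K)) as Hf. rewrite length_seq in Hf.
  unfold cnt in Hc. lia.
Qed.

Lemma sum_le_scal {Xt : Type} (g h : Xt -> R) (t : R) (l : list Xt) :
  (forall p, g p <= t * h p) ->
  fold_right Rplus 0 (map g l) <= t * fold_right Rplus 0 (map h l).
Proof.
  intros H; induction l as [|a l IH]; simpl; [lra|].
  specialize (H a). nra.
Qed.

Lemma sum_neg {Xt : Type} (g h : Xt -> R) (l : list Xt) :
  (forall p, g p = - h p) ->
  fold_right Rplus 0 (map g l) = - fold_right Rplus 0 (map h l).
Proof.
  intros H; induction l as [|a l IH]; simpl; [lra|]. rewrite H, IH; lra.
Qed.

Lemma PB_neg {Xt : Type} N K blk (Xs : nat -> Xt) Ys k (g h : Xt * R -> R) :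
  (forall p, g p = - h p) -> PB N K blk Xs Ys k g = - PB N K blk Xs Ys k h.
Proof.
  intros H. unfold PB.
  rewrite (sum_neg (fun i => g (Xs i, Ys i)) (fun i => h (Xs i, Ys i))). lra. intros; apply H.
Qed.

Lemma PB_le_scal {Xt : Type} N K blk (Xs : nat -> Xt) Ys k (g h : Xt * R -> R) t :
  (forall p, g p <= t * h p) -> PB N K blk Xs Ys k g <= t * PB N K blk Xs Ys k h.
Proof.
  intros H. unfold PB.
  set (l := filter _ _).
  assert (Hs := sum_le_scal (fun i => g (Xs i, Ys i)) (fun i => h (Xs i, Ys i)) t l (fun i => H _)).
  assert (0 <= INR K / INR N).
  { destruct (Req_dec (INR N) 0) as [E|E].
    - rewrite E. unfold Rdiv. rewrite Rinv_0. lra.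
    - unfold Rdiv. apply Rmult_le_pos; [apply pos_INR|].
      left. apply Rinv_0_lt_compat. pose proof (pos_INR N). lra. }
  nra.
Qed.

Lemma Ex_excess {Xt : Type} (P : Expectation (Xt * R)) lbar f g :
  integrable P (lossf lbar f) -> integrable P (lossf lbar g) ->
  Ex P (excess lbar f g) = Ex P (lossf lbar f) - Ex P (lossf lbar g).
Proof.
  intros Hf Hg.
  assert (E : excess lbar f g = fun p => lossf lbar f p + (-1) * lossf lbar g p).
  { apply functional_extensionality; intros p; unfold excess; ring. }
  rewrite E, Ex_add, Ex_scal; auto; [ring|]. apply int_scal; auto.
Qed.


Theorem lemma2
  (Xt : Type) (Ybar : R -> Prop) (lbar : R -> R -> R) (L : R)
  (P : Expectation (Xt * R)) (F : (Xt -> R) -> Prop) (fstar : Xt -> R)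
  (N K : nat) (blk : nat -> nat) (Xs : nat -> Xt) (Ys : nat -> R)
  (alpha theta gamma : R) (rt2 : R -> R) (A : R)
  (* convexity of Ybar *)
  (hYbar : forall u v t, Ybar u -> Ybar v -> 0 <= t <= 1 -> Ybar (t * u + (1 - t) * v))
  (* F is a class of functions X -> Ybar, contained in L2(mu) *)
  (hFval : forall f, F f -> forall x, Ybar (f x))
  (hFL2 : forall f, F f -> integrable P (fun p => (f (fst p)) ^ 2))
  (hFL2d : forall f g, F f -> F g ->
            integrable P (fun p => (f (fst p) - g (fst p)) ^ 2))
  (hFloss : forall f, F f -> integrable P (lossf lbar f))
  (* f* is the unique minimizer of f |-> P ell_f over F *)
  (hfstarF : F fstar)
  (hfstar_min : forall f, F f -> Ex P (lossf lbar fstar) <= Ex P (lossf lbar f))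
  (hfstar_uniq : forall f, F f -> Ex P (lossf lbar f) <= Ex P (lossf lbar fstar) -> f = fstar)
  (* (Lip-Conv) *)
  (hL : 0 < L)
  (hconv : forall y u v t, Ybar u -> Ybar v -> 0 <= t <= 1 ->
            lbar (t * u + (1 - t) * v) y <= t * lbar u y + (1 - t) * lbar v y)
  (hlip : forall y u v, Ybar u -> Ybar v -> Rabs (lbar u y - lbar v y) <= L * Rabs (u - v))
  (* (Conv) *)
  (hFconv : forall f g t, F f -> F g -> 0 <= t <= 1 ->
            F (fun x => t * f x + (1 - t) * g x))
  (* data / blocks *)
  (hK : (0 < K)%nat) (hKN : Nat.divide K N)
  (hblk : forall i, (i < N)%nat -> (blk i < K)%nat)
  (hblksz : forall k, (k < K)%nat ->
            cnt N (fun i => Nat.eqb (blk i) k) = (N / K)%nat)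
  (* parameters *)
  (halpha : 0 < alpha) (htheta : 0 < theta) (hgamma : 0 < gamma)
  (hrt2 : 0 < rt2 gamma)
  (hA : 0 < A)
  (hAcond : forall f, F f ->
      (L2norm P (fun x => f x - fstar x)) ^ 2 = CKr L K N theta alpha (rt2 gamma) ->
      (L2norm P (fun x => f x - fstar x)) ^ 2
        <= A * Ex P (excess lbar f fstar))
  (hthetaA : theta - / A < - theta)
  (* on the event Omega_K *)
  (hOmega : OmegaK P lbar F fstar N K blk Xs Ys theta (CKr L K N theta alpha (rt2 gamma))) :
  let C := CKr L K N theta alpha (rt2 gamma) in
  (exists M, M < - theta * C /\
     forall f, F f -> L2norm P (fun x => f x - fstar x) > sqrt C ->
       forall m, is_median K (fun k => PB N K blk Xs Ys k (excess lbar fstar f)) m ->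
         m <= M)
  /\
  (forall f, F f -> L2norm P (fun x => f x - fstar x) <= sqrt C ->
     forall m, is_median K (fun k => PB N K blk Xs Ys k (excess lbar fstar f)) m ->
       m <= theta * C).
Proof.
Proof.
  intros C.
  change (CKr L K N theta alpha (rt2 gamma)) with C in hOmega, hAcond.
  assert (HC : 0 < C).
  { unfold C, CKr. eapply Rlt_le_trans; [|apply Rmax_r].
    apply pow_lt; exact hrt2. }
  assert (HiA : 2 * theta < / A) by lra.
  assert (HCA : theta * C < C * / A - theta * C) by nra.
  split.
  - exists (theta * C - C * / A). split; [lra|].
    intros f Hf Hn m Hm.
    set (n := L2norm P (fun x => f x - fstar x)) in *.
    assert (Hsq : 0 < sqrt C) by (apply sqrt_lt_R0; lra).
    assert (Hnp : 0 < n) by lra.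
    set (t := sqrt C / n).
    assert (Ht0 : 0 < t) by (unfold t; apply Rdiv_lt_0_compat; lra).
    assert (Ht1 : t <= 1).
    { unfold t. apply (Rmult_le_reg_r n); [lra|]. unfold Rdiv.
      rewrite Rmult_assoc, Rinv_l; lra. }
    set (f0 := fun x => t * f x + (1 - t) * fstar x).
    assert (Hf0 : F f0) by (apply hFconv; auto; lra).
    assert (Hn0 : L2norm P (fun x => f0 x - fstar x) = sqrt C).
    { unfold L2norm.
      assert (E : (fun p : Xt * R => (f0 (fst p) - fstar (fst p)) ^ 2) =
                  fun p => t ^ 2 * (f (fst p) - fstar (fst p)) ^ 2).
      { apply functional_extensionality; intros p; unfold f0; ring. }
      rewrite E, Ex_scal by (apply hFL2d; auto).
      rewrite sqrt_mult_alt by (apply pow2_ge_0).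
      rewrite sqrt_pow2 by lra. fold (L2norm P (fun x => f x - fstar x)).
      fold n. unfold t. field. lra. }
    assert (HA0 := hAcond f0 Hf0).
    rewrite Hn0, pow2_sqrt in HA0 by lra. specialize (HA0 eq_refl).
    destruct (hOmega f0 Hf0 ltac:(rewrite Hn0; lra)) as [J [HND [HJK [HKJ HJ]]]].
    destruct Hm as [_ Hm2].
    destruct (maj_lemma K _ J HND HJK HKJ Hm2) as [k [Hk Hb]].
    destruct (Rle_dec m _) as [Hle|]; [|discriminate].
    eapply Rle_trans; [exact Hle|].
    specialize (HJ k Hk). apply abs_le_inv in HJ.
    assert (Hcv : PB N K blk Xs Ys k (excess lbar f0 fstar) <=
                  t * PB N K blk Xs Ys k (excess lbar f fstar)).
    { apply PB_le_scal. intros [x y]. unfold excess, lossf, f0; simpl.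
      pose proof (hconv y (f x) (fstar x) t (hFval f Hf x) (hFval fstar hfstarF x) ltac:(lra)).
      lra. }
    rewrite (PB_neg _ _ _ _ _ _ _ (excess lbar f fstar))
      by (intros p; unfold excess; ring).
    assert (C * / A <= A * Ex P (excess lbar f0 fstar) * / A)
      by (apply Rmult_le_compat_r; [left; apply Rinv_0_lt_compat; lra| exact HA0]).
    replace (A * Ex P (excess lbar f0 fstar) * / A) with (Ex P (excess lbar f0 fstar)) in H
      by (field; lra).
    set (q := PB N K blk Xs Ys k (excess lbar f fstar)) in *.
    assert (C * / A - theta * C <= t * q) by lra.
    assert (C * / A - theta * C <= q) by nra.
    lra.
  - intros f Hf Hn m Hm.
    destruct (hOmega f Hf Hn) as [J [HND [HJK [HKJ HJ]]]].
    destruct Hm as [_ Hm2].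
    destruct (maj_lemma K _ J HND HJK HKJ Hm2) as [k [Hk Hb]].
    destruct (Rle_dec m _) as [Hle|]; [|discriminate].
    eapply Rle_trans; [exact Hle|].
    specialize (HJ k Hk). apply abs_le_inv in HJ.
    rewrite (PB_neg _ _ _ _ _ _ _ (excess lbar f fstar))
      by (intros p; unfold excess; ring).
    rewrite Ex_excess in HJ by auto.
    specialize (hfstar_min f Hf). lra.
Qed.
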